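(* Let $q$ be a prime power and $1\le t_i\le t_o\le s$. If there exists a linear $(t_i,t_o,s,q)$-AONT, then there exists a linear $(t_i,t_o',s,q)$-AONT for every $t_o'$ with $t_o\le t_o'\le s$.
   Context: A linear $(t_i,t_o,s,q)$-AONT is given by an invertible $s\times s$ matrix $M$ over $\mathbb{F}_q$ defining the map $\mathbf{x}\mapsto\mathbf{y}=\mathbf{x}M^{-1}$ on row vectors of $\mathbb{F}_q^s$, such that for every set $I$ of $t_i$ input coordinates and every set $J$ of $s-t_o$ output coordinates, the pair $((x_i)_{i\in I},(y_j)_{j\in J})$ takes every value in $\mathbb{F}_q^{t_i+s-t_o}$ equally often as $\mathbf{x}$ ranges over $\mathbb{F}_q^s$. Equivalently, $M$ is invertible and every $t_o\times t_i$ submatrix of $M$ has rank $t_i$. *)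

(* Defs.v *)
From HB Require Import structures.
From mathcomp Require Import all_boot all_order all_algebra all_field.
Set Implicit Arguments. Unset Strict Implicit. Unset Printing Implicit Defensive.
Import GRing.Theory.
Local Open Scope ring_scope.

Definition submx_set (F : fieldType) (s : nat) (M : 'M[F]_s)
  (R C : {set 'I_s}) : 'M[F]_(#|R|, #|C|) :=
  \matrix_(i < #|R|, j < #|C|) M (enum_val i) (enum_val j).

(* A linear (ti, to, s, q)-AONT over the field F (q = #|F|) is given by an
   invertible s x s matrix M such that every to x ti submatrix has rank ti.
   Rows of M index outputs, columns index inputs (x = y M). *)
Definition linear_AONT (F : fieldType) (ti to s : nat) (M : 'M[F]_s) : Prop :=
  M \in unitmx /\
  forall R C : {set 'I_s}, #|R| = to -> #|C| = ti ->
    \rank (submx_set M R C) = ti.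

(* Main.v *)
Require Import Defs.
From HB Require Import structures.
From mathcomp Require Import all_boot all_order all_algebra all_field.

Theorem mainTheorem8 (F : finFieldType) (ti to s : nat) :
  (1 <= ti)%N -> (ti <= to)%N -> (to <= s)%N ->
  (exists M : 'M[F]_s, linear_AONT ti to M) ->
  forall to' : nat, (to <= to')%N -> (to' <= s)%N ->
    exists M' : 'M[F]_s, linear_AONT ti to' M'.
Proof.
move=> ti1 tito tos [M [uM HM]] to' toto' to's; exists M; split=> // R' C HR' HC.
set R := [set x in take to (enum R')].
have cR : #|R| = to.
  rewrite cardsE; move/card_uniqP: (take_uniq to (enum_uniq (mem R'))) ->.
  by rewrite size_take -cardE HR'; case: ltngtP toto'.
have sRR : R \subset R'.
  by apply/subsetP=> x; rewrite inE => /mem_take; rewrite mem_enum.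
have : (0 < #|R'|)%N by rewrite HR'; apply: leq_trans toto'; apply: leq_trans tito.
case/card_gt0P=> x0 x0R.
pose f (i : 'I_#|R|) := enum_rank_in x0R (enum_val i).
have E : submx_set M R C = rowsub f (submx_set M R' C).
  apply/matrixP=> i j; rewrite !mxE enum_rankK_in //.
  by apply: (subsetP sRR); apply: enum_valP.
apply/eqP; rewrite eqn_leq -{1}HC rank_leq_col /=.
rewrite -(HM R C cR HC) E; apply: mxrankS; exact: rowsub_sub.
Qed.
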